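(* Let $n\ge 2$ and let $d_1\ge d_2\ge\cdots\ge d_n\ge 1$ be integers, with node $k$ of $V=\{1,\dots,n\}$ assigned the value $d_k$. Fix a node $i\in V$ and a set $X(i)=\{j_1,\dots,j_m\}\subset V\setminus\{i\}$ with $m\le n-1-d_i$. Let $L(i)$ be the set of the $d_i$ smallest indices in $V\setminus(X(i)\cup\{i\})$. Then there is a simple graph $G(V,E)$ in which each node $k$ has degree $d_k$ and such that $(i,j)\notin E$ for all $j\in X(i)$, if and only if the sequence $d'|_{L(i)}$ reduced by $L(i)$ is graphical.
   Context: A sequence of nonnegative integers $(e_1,\dots,e_n)$ is graphical if there is a simple undirected graph (no loops, no multiple edges) on vertex set $\{1,\dots,n\}$ in which vertex $k$ has degree $e_k$ for every $k$ (vertices of degree $0$ are allowed). For a set $A(i)\subset V\setminus\{i\}$ with $|A(i)|=d_i$, the sequence reduced by $A(i)$ is $d'|_{A(i)}=(d'_1,\dots,d'_n)$ with $d'_k=d_k-1$ if $k\in A(i)$, $d'_k=d_k$ if $k\in V\setminus(A(i)\cup\{i\})$, and $d'_i=0$. *)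

(* Defs.v *)
From mathcomp Require Import all_boot.
Set Implicit Arguments. Unset Strict Implicit. Unset Printing Implicit Defensive.

(* Vertex set V = {1,...,n} is modelled by 'I_n = {0,...,n-1} (order preserved). *)

Definition simple_graph n (g : rel 'I_n) : Prop := irreflexive g /\ symmetric g.

Definition has_degrees n (g : rel 'I_n) (e : 'I_n -> nat) : Prop :=
  forall k, #|[set j | g k j]| = e k.

Definition graphical n (e : 'I_n -> nat) : Prop :=
  exists g : rel 'I_n, simple_graph g /\ has_degrees g e.

Definition reduced n (d : 'I_n -> nat) (i : 'I_n) (A : {set 'I_n}) : 'I_n -> nat :=
  fun k => if k == i then 0 else if k \in A then d k - 1 else d k.

(* L(i): the d_i smallest indices of V \ (X ∪ {i}). *)
Definition Lset n (d : 'I_n -> nat) (i : 'I_n) (X : {set 'I_n}) : {set 'I_n} :=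
  [set k | [&& k \notin X, k != i &
     #|[set j : 'I_n | [&& j \notin X, j != i & (j < k)%N]]| < d i]].

(* Main.v *)
Require Import Defs.
From mathcomp Require Import all_boot zify.
Set Implicit Arguments. Unset Strict Implicit. Unset Printing Implicit Defensive.

Section Rank.
Variables (n : nat) (i : 'I_n) (X : {set 'I_n}).
Definition elig (k : 'I_n) := (k \notin X) && (k != i).
Definition rk (k : 'I_n) := #|[set j : 'I_n | [&& j \notin X, j != i & (j < k)%N]]|.
Definition S m := [set k : 'I_n | [&& k \notin X, k != i & rk k < m]].

Lemma rk_mono (j k : 'I_n) : j <= k -> rk j <= rk k.
Proof.
move=> hjk; apply: subset_leq_card; apply/subsetP => x; rewrite !inE.
by case/and3P => -> -> hx; rewrite (leq_trans hx hjk).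
Qed.

Lemma rk_strict (j k : 'I_n) : elig j -> j < k -> rk j < rk k.
Proof.
move=> /andP[h1 h2] hjk; apply: proper_card; apply/properP; split.
  apply/subsetP => x; rewrite !inE.
  by case/and3P => -> -> hx; rewrite (ltn_trans hx hjk).
by exists j; rewrite !inE ?h1 ?h2 ?hjk // ltnn !andbF.
Qed.

Lemma card_S m : m <= #|[set k | elig k]| -> #|S m| = m.
Proof.
elim: m => [|m IH] hm.
  by apply/eqP; rewrite cards_eq0; apply/eqP/setP => k; rewrite !inE ltn0 !andbF.
have IHm := IH (ltnW hm).
set D := [set k | elig k] :\: S m.
have : D != set0.
  rewrite -cards_eq0 cardsD subn_eq0 -ltnNge.
  by rewrite (leq_ltn_trans (subset_leq_card (subsetIr _ _))) // IHm.
case/set0Pn => k0 hk0.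
case: (@arg_minnP _ k0 (fun x => x \in D) (fun k : 'I_n => val k) hk0).
move=> k hk hmin.
move: hk; rewrite /= /D !inE => /andP[hkS hke].
have hkS' : ~~ (rk k < m) by move: hkS; case/andP: hke => -> ->.
have hSm : [set j : 'I_n | [&& j \notin X, j != i & (j < k)%N]] = S m.
  apply/setP => j; rewrite !inE.
  apply/idP/idP.
    case/and3P => h1 h2 h3; rewrite h1 h2 /=.
    apply/negPn/negP => hj.
    have := hmin j; rewrite !inE h1 h2 hj /= => /(_ (introT andP (conj h1 h2))).
    by rewrite leqNgt h3.
  case/and3P => h1 h2 h3; rewrite h1 h2 /=.
  rewrite ltnNge; apply/negP => hkj.
  have := rk_mono hkj; rewrite leqNgt; move/negP; apply.
  by rewrite (leq_trans h3) // leqNgt.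
have rkk : rk k = m by rewrite /rk hSm IHm.
have -> : S m.+1 = k |: S m.
  apply/setP => j; rewrite !inE.
  case: (eqVneq j k) => [->|hjk] /=.
    by move: hke; rewrite /elig => /andP[-> ->]; rewrite rkk ltnSn.
  apply/idP/idP; case/and3P => h1 h2 h3; rewrite h1 h2 /=.
    rewrite ltnS leq_eqVlt in h3; case/orP: h3 => // /eqP h3.
    case: (ltngtP j k) => hc.
    - by have := rk_strict (introT andP (conj h1 h2)) hc; rewrite h3 rkk ltnn.
    - by have := rk_strict hke hc; rewrite h3 rkk ltnn.
    - by rewrite (val_inj hc) eqxx in hjk.
  exact: ltnW.
by rewrite cardsU1 /S inE (negbTE hkS) IHm.
Qed.
End Rank.

Definition ep n (a b x y : 'I_n) := ((x == a) && (y == b)) || ((x == b) && (y == a)).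

Lemma ep_xx n (a b x : 'I_n) : a != b -> ep a b x x = false.
Proof.
move=> h; apply/negP; rewrite /ep => /orP[] /andP[/eqP e1 /eqP e2].
  by rewrite -e1 -e2 eqxx in h.
by rewrite -e1 -e2 eqxx in h.
Qed.

Lemma swap_card (T : finType) (A : {set T}) a b :
  a \in A -> b \notin A -> #|b |: (A :\ a)| = #|A|.
Proof.
move=> ha hb; rewrite cardsU1 (cardsD1 a A) ha !inE.
by rewrite (negbTE hb) andbF.
Qed.

Ltac brute := repeat match goal with
  | |- context [@eq_op _ ?t ?s] => case: (@eq_op _ t s)
  | |- context [?g ?a ?b] => match type of g with rel _ => case: (g a b) end
  end.

Section Swap.
Variables (n : nat) (g : rel 'I_n) (d : 'I_n -> nat) (i v u w : 'I_n).
Hypotheses (hs : simple_graph g) (hd : has_degrees g d).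
Hypotheses (giv : g i v) (giu : ~~ g i u) (guw : g u w) (gvw : ~~ g v w).
Hypotheses (uv : u != v) (wv : w != v) (ui : u != i).

Definition g' : rel 'I_n := fun x y =>
  (g x y && ~~ ep i v x y && ~~ ep u w x y) || ep i u x y || ep v w x y.

Lemma swap_ok : simple_graph g' /\ has_degrees g' d /\
  [set j | g' i j] = u |: ([set j | g i j] :\ v).
Proof.
case: hs => hirr hsym.
have iv : i != v by apply: contraTneq giv => ->; rewrite hirr.
have uw : u != w by apply: contraTneq guw => ->; rewrite hirr.
have iw : i != w by apply: contraNneq giu => ->; rewrite hsym.
have gvi : g v i by rewrite hsym.
have gui : ~~ g u i by rewrite hsym.
have gwu : g w u by rewrite hsym.
have gwv : ~~ g w v by rewrite hsym.
have vi := iv; rewrite eq_sym in vi.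
have wu := uw; rewrite eq_sym in wu.
have wi := iw; rewrite eq_sym in wi.
have iu := ui; rewrite eq_sym in iu.
have vu := uv; rewrite eq_sym in vu.
have vw := wv; rewrite eq_sym in vw.
have key : forall x a b, a \in [set j | g x j] -> b \notin [set j | g x j] ->
    [set j | g' x j] = b |: ([set j | g x j] :\ a) -> #|[set j | g' x j]| = d x.
  by move=> x a b ha hb ->; rewrite swap_card // hd.
split; [split|split].
- move=> x; rewrite /g' hirr /= ep_xx // ep_xx //.
- move=> x y; rewrite /g' /ep hsym; brute; by [].
- move=> x.
  case: (eqVneq x i) => [->|xi].
    apply: (key _ v u); rewrite ?inE //.
    apply/setP => y; rewrite !inE /g' /ep !eqxx (negbTE iu) (negbTE iw) (negbTE iv) /=.
    by brute.
  case: (eqVneq x v) => [->|xv].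
    apply: (key _ i w); rewrite ?inE //.
    apply/setP => y; rewrite !inE /g' /ep !eqxx (negbTE vi) (negbTE vu) (negbTE vw) /=.
    by brute.
  case: (eqVneq x u) => [->|xu].
    apply: (key _ w i); rewrite ?inE //.
    apply/setP => y; rewrite !inE /g' /ep !eqxx (negbTE ui) (negbTE uv) (negbTE uw) /=.
    by brute.
  case: (eqVneq x w) => [->|xw].
    apply: (key _ u v); rewrite ?inE //.
    apply/setP => y; rewrite !inE /g' /ep !eqxx (negbTE wi) (negbTE wv) (negbTE wu) /=.
    by brute.
  have -> : [set j | g' x j] = [set j | g x j]; last exact: hd.
  apply/setP => y; rewrite !inE /g' /ep.
  rewrite (negbTE xi) (negbTE xv) (negbTE xu) (negbTE xw) /=. by brute.
- apply/setP => y; rewrite !inE /g' /ep !eqxx (negbTE iu) (negbTE iw) (negbTE iv) /=.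
  by brute.
Qed.
End Swap.

Lemma card_L n (d : 'I_n -> nat) (i : 'I_n) (X : {set 'I_n}) :
  i \notin X -> #|X| + d i <= n - 1 -> #|Lset d i X| = d i.
Proof.
move=> hiX hc; apply: (card_S (i:=i) (X:=X)).
have -> : [set k | elig i X k] = ~: (i |: X).
  by apply/setP => k; rewrite !inE /elig negb_or andbC.
have h := cardsC (i |: X); rewrite card_ord cardsU1 hiX in h.
move: h hc; rewrite /=; set c := #|~: (i |: X)|; set c2 := #|X|. lia.
Qed.

Section Fwd.
Variables (n : nat) (d : 'I_n -> nat) (i : 'I_n) (X : {set 'I_n}).
Hypothesis hmono : forall k l : 'I_n, k <= l -> d l <= d k.
Hypothesis hL : #|Lset d i X| = d i.
Let L := Lset d i X.

Lemma fwd_step (g : rel 'I_n) : simple_graph g -> has_degrees g d ->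
  (forall j, j \in X -> ~~ g i j) ->
  [set j | g i j] :\: L != set0 ->
  exists g2 : rel 'I_n, [/\ simple_graph g2, has_degrees g2 d,
    (forall j, j \in X -> ~~ g2 i j) &
    #|[set j | g2 i j] :\: L| < #|[set j | g i j] :\: L|].
Proof.
move=> hs hd hX /set0Pn [v]; rewrite in_setD inE => /andP[hvL giv].
have [hirr hsym] := hs.
have : ~~ (L \subset [set j | g i j]).
  apply/negP => hsub.
  have : L == [set j | g i j].
    by rewrite eqEcard hsub /= hd hL.
  by move/eqP => e; move: hvL; rewrite e inE giv.
case/subsetPn => u huL; rewrite inE => giu.
have huL' := huL; rewrite /L /Lset inE in huL'.
case/and3P: huL' => uX ui rku.
have vX : v \notin X by apply: contraL giv => /hX.
have vi : v != i by apply: contraTneq giv => ->; rewrite hirr.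
have rkv : ~~ (rk i X v < d i).
  by move: hvL; rewrite /L /Lset inE vX vi.
have uv : u < v.
  rewrite ltnNge; apply/negP => hvu.
  by move: rkv; rewrite (leq_ltn_trans (rk_mono i X hvu) rku).
have duv := hmono (ltnW uv).
have uv' : u != v by rewrite neq_ltn uv.
have : ~~ ([set j | g u j] :\ v \subset [set j | g v j] :\ u).
  apply/negP => hsub.
  have : [set j | g u j] :\ v \proper [set j | g v j] :\ u.
    apply/properP; split => //; exists i.
      by rewrite !inE eq_sym ui hsym giv.
    by rewrite !inE hsym (negbTE giu) andbF.
  move/proper_card; rewrite ltnNge; move/negP; apply.
  have h1 := cardsD1 v [set j | g u j]; have h2 := cardsD1 u [set j | g v j].
  rewrite !hd !inE (hsym u v) in h1 h2.
  rewrite -(leq_add2l (g v u)) -h1 -h2; exact: duv.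
case/subsetPn => w; rewrite !inE => /andP[wv guw] /negP hw.
have gvw : ~~ g v w.
  apply/negP => gvw; apply: hw; rewrite gvw andbT.
  by apply: contraTneq guw => ->; rewrite hirr.
have [hs2 [hd2 hN]] := swap_ok hs hd giv giu guw gvw uv' wv ui.
exists (g' g i v u w); split => //.
  move=> j hj; apply/negP => hg.
  have : j \in [set j | g' g i v u w i j] by rewrite inE.
  rewrite hN !inE => /orP[/eqP e|/andP[_ gij]].
    by rewrite -e hj in uX.
  by move: (hX _ hj); rewrite gij.
apply: proper_card; apply/properP; split.
  apply/subsetP => y; rewrite hN !in_setD in_setU1 in_setD1.
  move=> /andP[yL /orP[/eqP e|/andP[_ hy]]].
    by rewrite e huL in yL.
  by rewrite yL hy.
exists v; rewrite !in_setD hvL /=; first by rewrite inE.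
by rewrite hN in_setU1 in_setD1 eqxx andFb orbF eq_sym.
Qed.
End Fwd.

Lemma fwd_all n (d : 'I_n -> nat) (i : 'I_n) (X : {set 'I_n}) :
  (forall k l : 'I_n, k <= l -> d l <= d k) -> #|Lset d i X| = d i ->
  forall k (g : rel 'I_n), simple_graph g -> has_degrees g d ->
  (forall j, j \in X -> ~~ g i j) -> #|[set j | g i j] :\: Lset d i X| <= k ->
  exists g2 : rel 'I_n, [/\ simple_graph g2, has_degrees g2 d &
     [set j | g2 i j] = Lset d i X].
Proof.
move=> hmono hL; elim=> [|k IH] g hs hd hX hk.
- exists g; split => //.
  have : [set j | g i j] :\: Lset d i X == set0 by rewrite -cards_eq0 -leqn0.
  move=> h0; apply/eqP; rewrite eqEcard hL hd leqnn andbT.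
  by rewrite -setD_eq0.
- case: (eqVneq ([set j | g i j] :\: Lset d i X) set0) => h0.
    exists g; split => //; apply/eqP; rewrite eqEcard hL hd leqnn andbT.
    by rewrite -setD_eq0 h0.
  have [g2 [hs2 hd2 hX2 hlt]] := fwd_step hmono hL hs hd hX h0.
  apply: (IH g2) => //.
  by rewrite -ltnS (leq_trans hlt hk).
Qed.

Theorem theorem3 (n : nat) (d : 'I_n -> nat) (i : 'I_n) (X : {set 'I_n}) :
  2 <= n ->
  (forall k l : 'I_n, k <= l -> d l <= d k) ->
  (forall k : 'I_n, 1 <= d k) ->
  i \notin X ->
  #|X| + d i <= n - 1 ->
  (exists g : rel 'I_n,
      simple_graph g /\ has_degrees g d /\ (forall j, j \in X -> ~~ g i j))
  <-> graphical (reduced d i (Lset d i X)).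
Proof.
move=> _ hmono hpos hiX hc.
have hL := card_L hiX hc.
have iL : i \notin Lset d i X by rewrite inE eqxx andbF.
have LX : forall j, j \in Lset d i X -> j \notin X by move=> j; rewrite inE => /andP[].
split.
- case=> g [hs [hd hX]].
  have [g2 [[hirr hsym] hd2 hN]] :=
    @fwd_all _ d i X hmono hL _ g hs hd hX (leqnn _).
  exists (fun x y => [&& g2 x y, x != i & y != i]); split.
    split; first by move=> x; rewrite hirr.
    by move=> x y /=; rewrite hsym; case: (x != i); case: (y != i); rewrite ?andbF ?andbT.
  move=> k; rewrite /reduced.
  case: (eqVneq k i) => [->|ki].
    apply/eqP; rewrite cards_eq0; apply/eqP/setP => y; by rewrite !inE andbF.
  have -> : [set j | [&& g2 k j, ~~ false & j != i]] = [set j | g2 k j] :\ i.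
    by apply/setP => y; rewrite !inE andbC.
  have h := cardsD1 i [set j | g2 k j]; rewrite hd2 in h.
  have e : (i \in [set j | g2 k j]) = (k \in Lset d i X).
    by rewrite -hN !inE hsym.
  by move: h; rewrite e; case: (k \in Lset d i X) => /= ->; rewrite ?add1n ?add0n ?subn1.
- case=> g0 [[hirr hsym] hd0].
  have g0i : forall y, g0 i y = false.
    move=> y; apply/negP => hy.
    have := hd0 i; rewrite /reduced eqxx => /eqP; rewrite cards_eq0 => /eqP e.
    have : y \in [set j | g0 i j] by rewrite inE.
    by rewrite e inE.
  set L := Lset d i X in hL iL LX hd0 *.
  exists (fun x y => [|| g0 x y, (x == i) && (y \in L) | (y == i) && (x \in L)]).
  split; [split|split].
  + move=> x /=; rewrite hirr /=.
    by case: (eqVneq x i) => [->|] /=; rewrite ?(negbTE iL) ?andbF.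
  + move=> x y /=; rewrite hsym.
    by case: (g0 y x); case: (x == i); case: (y == i); case: (x \in L); case: (y \in L).
  + move=> k; case: (eqVneq k i) => [->|ki].
      rewrite -hL; apply: eq_card => y; rewrite !inE g0i /=. by rewrite eqxx !andbF orbF.
    have hk := hd0 k; rewrite /reduced (negbTE ki) in hk.
    have hiN : i \notin [set j | g0 k j] by rewrite inE hsym g0i.
    case hkL : (k \in L); rewrite hkL in hk.
      transitivity #|i |: [set j | g0 k j]|; last first.
        by rewrite cardsU1 hiN hk add1n subn1 prednK // hpos.
      apply: eq_card => y; rewrite in_setU1 in_set ?(negbTE ki) ?hkL /= inE. by rewrite andbT orbC.
    rewrite -hk; apply: eq_card => y; rewrite !inE ?(negbTE ki) /=.
    by rewrite !andbF !orbF.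
  + move=> j hj /=; rewrite g0i eqxx /=.
    have -> : (j \in L) = false by apply/negP => /LX; rewrite hj.
    by rewrite (negbTE iL) andbF.
Qed.
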